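(* Let $r\le s$ be integers, $n=s-r+1$, $\beta_r,\dots,\beta_s$ pairwise distinct real numbers, $B_j=e^{\beta_j}$. For $1\le k\le n$ and $r\le i\le s$ let $$I_{ki}=2i^{2r-s+1-i}\int\frac{d\alpha}{2\pi}\,e^{(k-\frac{n+1}{2})\alpha}\prod_{j=r}^{i}\frac{1}{2\cosh\frac12(\alpha-\beta_j)}\prod_{j=i}^{s}\frac{1}{2\sinh\frac12(\alpha-\beta_j)}$$ (integral along a horizontal line slightly above the real axis), $J_{ki}=I_{ki}+(-1)^{s+i}\overline{I_{ki}}$, and $$F_{ji}=\frac{1}{\prod_{k=r,k\ne j}^{i}(B_j-B_k)\prod_{k=i}^{s}(B_j+B_k)}\ (r\le j\le i),\qquad G_{ji}=\frac{(-1)^n}{\prod_{k=r}^{i}(B_j+B_k)\prod_{k=i,k\ne j}^{s}(B_j-B_k)}\ (i\le j\le s).$$ Then $$I_{ki}=\frac{i^{s+1-i}}{\pi}B_i^{1/2}\Big(\prod_{j=r}^sB_j\Big)^{1/2}\Big(\sum_{j=r}^{i}(-B_j)^{k-1}\beta_jF_{ji}+\sum_{j=i}^{s}B_j^{k-1}(\beta_j+\pi i)G_{ji}\Big),$$ $$J_{ki}=2i^{s-i}B_i^{1/2}\Big(\prod_{j=r}^sB_j\Big)^{1/2}\sum_{j=r}^{i}(-B_j)^{k-1}F_{ji}=-2i^{s-i}B_i^{1/2}\Big(\prod_{j=r}^sB_j\Big)^{1/2}\sum_{j=i}^{s}B_j^{k-1}G_{ji}.$$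
   Context: $i=\sqrt{-1}$ where it appears as a base of powers; $B_j^{1/2}=e^{\beta_j/2}$; the bar denotes complex conjugation. *)

(* Defs.v *)
From Stdlib Require Import Reals ZArith List.
From Coquelicot Require Export Coquelicot.
Export ListNotations.
Open Scope R_scope.

Definition Cexp (z : C) : C :=
  (exp (fst z) * cos (snd z), exp (fst z) * sin (snd z)).
Definition Ccosh (z : C) : C := ((Cexp z + Cexp (- z)) / 2)%C.
Definition Csinh (z : C) : C := ((Cexp z - Cexp (- z)) / 2)%C.

Definition Cpowz (z : C) (m : Z) : C :=
  if (0 <=? m)%Z then Cpow z (Z.to_nat m)
  else Cinv (Cpow z (Z.to_nat (- m))).

(* the integers a, a+1, ..., b  (empty if b < a) *)
Definition zrange (a b : Z) : list Z :=
  map (fun m => (a + Z.of_nat m)%Z) (seq 0 (Z.to_nat (b - a + 1))).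

Definition zsumC (a b : Z) (f : Z -> C) : C :=
  fold_right (fun j acc => (f j + acc)%C) (RtoC 0) (zrange a b).
Definition zprodR (a b : Z) (f : Z -> R) : R :=
  fold_right (fun j acc => f j * acc) 1 (zrange a b).
Definition zprodC (a b : Z) (f : Z -> C) : C :=
  fold_right (fun j acc => (f j * acc)%C) (RtoC 1) (zrange a b).
Definition zprodR_ne (a b j0 : Z) (f : Z -> R) : R :=
  fold_right (fun j acc => f j * acc) 1
    (filter (fun j => negb (Z.eqb j j0)) (zrange a b)).

Section Objects.
Variables (r s : Z) (beta : Z -> R).

Definition nn : Z := (s - r + 1)%Z.
Definition BB (j : Z) : R := exp (beta j).

(* integrand of I_{ki} (including the 1/(2 pi) of d alpha / (2 pi)),
   as a function of the complex variable alpha *)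
Definition integrandI (k i : Z) (alpha : C) : C :=
  (/ (2 * PI) * Cexp ((IZR k - (IZR nn + 1) / 2) * alpha)
   * zprodC r i (fun j => / (2 * Ccosh ((alpha - beta j) / 2)))
   * zprodC i s (fun j => / (2 * Csinh ((alpha - beta j) / 2))))%C.

(* I_{ki} computed along the horizontal line Im alpha = eps:
   2 i^{2r-s+1-i} * (improper integral over t in R of integrandI (t + i eps)).
   [Ival_on_line k i eps v] says the improper integral converges and
   the resulting value of I_{ki} is v. *)
Definition Ival_on_line (k i : Z) (eps : R) (v : C) : Prop :=
  exists L : C,
    is_RInt_gen (V := C_R_NormedModule)
      (fun t : R => integrandI k i (RtoC t + RtoC eps * Ci)%C)
      (Rbar_locally m_infty) (Rbar_locally p_infty) L
    /\ v = (2 * Cpowz Ci (2 * r - s + 1 - i) * L)%C.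

Definition Jof (i : Z) (I : C) : C :=
  (I + Cpowz (RtoC (-1)) (s + i) * Cconj I)%C.

Definition FF (j i : Z) : R :=
  / (zprodR_ne r i j (fun k => BB j - BB k) * zprodR i s (fun k => BB j + BB k)).
Definition GG (j i : Z) : R :=
  (-1) ^ Z.to_nat nn /
    (zprodR r i (fun k => BB j + BB k) * zprodR_ne i s j (fun k => BB j - BB k)).

Definition prefac (i : Z) : R :=
  exp (beta i / 2) * sqrt (zprodR r s BB).

Definition RHS_I (k i : Z) : C :=
  (Cpowz Ci (s + 1 - i) / PI * prefac i *
   (zsumC r i (fun j => RtoC ((- BB j) ^ Z.to_nat (k - 1) * beta j * FF j i))
    + zsumC i s (fun j => BB j ^ Z.to_nat (k - 1) * (beta j + PI * Ci) * GG j i)))%C.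

Definition RHS_J1 (k i : Z) : C :=
  (2 * Cpowz Ci (s - i) * prefac i *
   zsumC r i (fun j => RtoC ((- BB j) ^ Z.to_nat (k - 1) * FF j i)))%C.

Definition RHS_J2 (k i : Z) : C :=
  (- (2 * Cpowz Ci (s - i) * prefac i *
      zsumC i s (fun j => RtoC (BB j ^ Z.to_nat (k - 1) * GG j i))))%C.
End Objects.

(* Main.v *)
Require Import Defs.
From Stdlib Require Import Reals ZArith List Lia Lra.
From Coquelicot Require Import Coquelicot.
Open Scope R_scope.

Definition Ceqb (a b : C) : bool :=
  if Req_EM_T (fst a) (fst b) then if Req_EM_T (snd a) (snd b) then true else false else false.
Lemma Ceqb_true a b : Ceqb a b = true <-> a = b.
Proof.
  destruct a as [a1 a2], b as [b1 b2]; unfold Ceqb; simpl.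
  destruct (Req_EM_T a1 b1); destruct (Req_EM_T a2 b2); split; intro H; try congruence;
  inversion H; subst; tauto.
Qed.
Lemma Ceqb_refl a : Ceqb a a = true.
Proof. apply Ceqb_true; auto. Qed.
Lemma Ceqb_false a b : a <> b -> Ceqb a b = false.
Proof. intro H. destruct (Ceqb a b) eqn:E; auto. apply Ceqb_true in E. tauto. Qed.

Definition sumC {T} (l : list T) (f : T -> C) : C :=
  fold_right (fun a acc => (f a + acc)%C) (RtoC 0) l.
Definition Pc (l : list C) (x : C) : C :=
  fold_right (fun a acc => ((x - a) * acc)%C) (RtoC 1) l.
Definition rmC (a : C) (l : list C) := filter (fun b => negb (Ceqb b a)) l.
Definition PFsum (l : list C) (q : nat) (x : C) : C :=
  sumC l (fun a => (a ^ q / Pc (rmC a l) a / (x - a))%C).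
Definition Tsum (l : list C) (q : nat) : C :=
  sumC l (fun a => (a ^ q / Pc (rmC a l) a)%C).

Lemma sumC_cons {T} (a : T) l f : sumC (a :: l) f = (f a + sumC l f)%C.
Proof. reflexivity. Qed.

Lemma sumC_plus {T} (l : list T) f g : sumC l (fun a => f a + g a)%C = (sumC l f + sumC l g)%C.
Proof. induction l; unfold sumC in *; cbn [fold_right]. ring. rewrite IHl. ring. Qed.
Lemma sumC_minus {T} (l : list T) f g : sumC l (fun a => f a - g a)%C = (sumC l f - sumC l g)%C.
Proof. induction l; unfold sumC in *; cbn [fold_right]. ring. rewrite IHl. ring. Qed.
Lemma sumC_scal {T} (l : list T) c f : sumC l (fun a => c * f a)%C = (c * sumC l f)%C.
Proof. induction l; unfold sumC in *; cbn [fold_right]. ring. rewrite IHl. ring. Qed.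
Lemma sumC_ext {T} (l : list T) f g : (forall a, In a l -> f a = g a) -> sumC l f = sumC l g.
Proof. induction l; unfold sumC in *; cbn [fold_right In]; intros; auto. rewrite H, IHl; auto. Qed.

Lemma sub_nz (a b : C) : a <> b -> (a - b)%C <> RtoC 0.
Proof. intros H H'. apply H. transitivity ((a - b) + b)%C. ring. rewrite H'. ring. Qed.

Lemma Pc_nz l x : ~ In x l -> Pc l x <> RtoC 0.
Proof.
  induction l; simpl; intros.
  - intro H'. apply RtoC_inj in H'. lra.
  - apply Cmult_neq_0. apply sub_nz. intro; subst; tauto.
    apply IHl; auto.
Qed.

Lemma rmC_notin a l : ~ In a l -> rmC a l = l.
Proof.
  induction l; simpl; intros; auto.
  rewrite Ceqb_false. simpl. f_equal. apply IHl; tauto. intro; subst; tauto.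
Qed.
Lemma rmC_cons_ne a b l : a <> b -> rmC a (b :: l) = b :: rmC a l.
Proof. intros; unfold rmC; simpl. rewrite Ceqb_false; auto. Qed.
Lemma rmC_cons_eq a l : rmC a (a :: l) = rmC a l.
Proof. intros; unfold rmC; simpl. rewrite Ceqb_refl; auto. Qed.
Lemma In_rmC a b l : In b (rmC a l) -> In b l /\ b <> a.
Proof.
  unfold rmC; intro H; apply filter_In in H. destruct H; split; auto.
  intro; subst. rewrite Ceqb_refl in H0. discriminate.
Qed.


Lemma PF_main : forall l, NoDup l -> forall q x, ~ In x l -> (q < length l)%nat ->
  (x ^ q / Pc l x)%C = PFsum l q x.
Proof.
  induction l as [|b l IH]; simpl; intros Hnd q x Hx Hq. lia.
  inversion Hnd as [|b' l' Hb Hnd']; subst.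
  assert (Hxb : x <> b) by (intro; subst; tauto). assert (Hxl : ~ In x l) by tauto.
  assert (Hrmb : rmC b (b :: l) = l) by (rewrite rmC_cons_eq; apply rmC_notin; auto).
  assert (Hsmall : forall q y, ~ In y (b :: l) -> (q < length l)%nat ->
            (y ^ q / ((y - b) * Pc l y))%C = PFsum (b :: l) q y).
  { clear q x Hx Hq Hxb Hxl. intros q y Hy Hq.
    assert (Hyb : y <> b) by (intro; apply Hy; left; auto).
    assert (Hyl : ~ In y l) by (intro; apply Hy; right; auto).
    unfold PFsum at 1. rewrite sumC_cons, Hrmb.
    pose proof (IH Hnd' q y Hyl Hq) as E1.
    pose proof (IH Hnd' q b Hb Hq) as E2.
    unfold PFsum in E1, E2.
    rewrite (sumC_ext l _ (fun a => (/ (y - b)) * (a ^ q / Pc (rmC a l) a / (y - a))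
                + (- / (y - b)) * (a ^ q / Pc (rmC a l) a / (b - a)))%C).
    2:{ intros a Ha. assert (Hab : a <> b) by (intro; subst; tauto).
        assert (Hay : a <> y) by (intro; subst; tauto).
        rewrite rmC_cons_ne by auto. simpl Pc.
        assert (Pc (rmC a l) a <> 0) by (apply Pc_nz; intro H'; apply In_rmC in H'; tauto).
        field. repeat split; auto; apply sub_nz; auto. }
    rewrite sumC_plus, !sumC_scal, <- E1, <- E2.
    assert (Pc l y <> 0) by (apply Pc_nz; auto).
    assert (Pc l b <> 0) by (apply Pc_nz; auto).
    field. repeat split; auto; apply sub_nz; auto. }
  destruct (Nat.lt_ge_cases q (length l)) as [Hl|Hl].
  - apply Hsmall; auto.
  - assert (q = length l) by lia. subst q.
    destruct l as [|c l0].
    + unfold PFsum. rewrite sumC_cons, Hrmb. unfold sumC; simpl. field. apply sub_nz; auto.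
    + set (l := c :: l0) in *. 
      assert (Hq1 : length l = S (pred (length l))) by (subst l; simpl; lia).
      set (q' := pred (length l)) in *.
      rewrite Hq1.
      assert (Hq' : (q' < length l)%nat) by lia.
      pose proof (IH Hnd' q' x Hxl Hq') as E1.
      pose proof (Hsmall q' x Hx Hq') as E2.
      transitivity (x ^ q' / Pc l x + b * (x ^ q' / ((x - b) * Pc l x)))%C.
      { rewrite Cpow_S. assert (Pc l x <> 0) by (apply Pc_nz; auto).
        field. split; auto. apply sub_nz; auto. }
      rewrite E1, E2. unfold PFsum. rewrite !sumC_cons, Hrmb.
      transitivity (b * (b ^ q' / Pc l b / (x - b)) + 
        sumC l (fun a => a ^ q' / Pc (rmC a l) a / (x - a) + 
           b * (a ^ q' / Pc (rmC a (b :: l)) a / (x - a))))%C.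
      { rewrite sumC_plus, sumC_scal. ring. }
      simpl Cpow. f_equal. field. split. apply Pc_nz; auto. apply sub_nz; auto.
      apply sumC_ext. intros a Ha. assert (Hab : a <> b) by (intro; subst; tauto).
      assert (Hax : a <> x) by (intro; subst; tauto).
      rewrite rmC_cons_ne by auto. simpl Pc.
      assert (Pc (rmC a l) a <> 0) by (apply Pc_nz; intro H'; apply In_rmC in H'; tauto).
      field. repeat split; auto; apply sub_nz; auto.
Qed.

Lemma Tsum_zero l q x : NoDup l -> ~ In x l -> (S (S q) <= length l)%nat -> Tsum l q = 0.
Proof.
  intros Hnd Hx Hq.
  pose proof (PF_main l Hnd q x Hx ltac:(lia)) as E1.
  pose proof (PF_main l Hnd (S q) x Hx ltac:(lia)) as E2.
  assert (Tsum l q = x * PFsum l q x - PFsum l (S q) x)%C.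
  { unfold Tsum, PFsum. rewrite <- sumC_scal, <- sumC_minus. apply sumC_ext.
    intros a Ha. simpl Cpow. assert (a <> x) by (intro; subst; tauto).
    assert (Pc (rmC a l) a <> 0) by (apply Pc_nz; intro H'; apply In_rmC in H'; tauto).
    field. split; auto. apply sub_nz; auto. }
  rewrite H, <- E1, <- E2. simpl Cpow. field. apply Pc_nz; auto.
Qed.

Lemma Cexp_add z w : Cexp (z + w) = (Cexp z * Cexp w)%C.
Proof.
  destruct z as [a b], w as [c d]; unfold Cexp; simpl.
  apply injective_projections; simpl; rewrite exp_plus, ?cos_plus, ?sin_plus; ring.
Qed.
Lemma Cexp_RtoC a : Cexp (RtoC a) = RtoC (exp a).
Proof. unfold Cexp; simpl. rewrite cos_0, sin_0. apply injective_projections; simpl; ring. Qed.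
Lemma Cexp_0 : Cexp (RtoC 0) = RtoC 1.
Proof. rewrite Cexp_RtoC, exp_0. auto. Qed.
Lemma Cexp_nz z : Cexp z <> RtoC 0.
Proof.
  destruct z as [a b]; unfold Cexp; simpl. intro H. injection H as H1 H2.
  pose proof (exp_pos a) as Ha. pose proof (sin2_cos2 b) as Hs. unfold Rsqr in *.
  apply Rmult_integral in H1. apply Rmult_integral in H2. 
  destruct H1 as [H1|H1]; [lra|]. destruct H2 as [H2|H2]; [lra|]. rewrite H1, H2 in Hs. lra.
Qed.
Lemma Cexp_opp z : Cexp (- z) = (/ Cexp z)%C.
Proof.
  assert (H : (Cexp z * Cexp (-z))%C = RtoC 1) by (rewrite <- Cexp_add, Cplus_opp_r; apply Cexp_0).
  pose proof (Cexp_nz z). 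
  rewrite <- (Cmult_1_l (/ Cexp z)%C), <- H. field. auto.
Qed.
Lemma Cexp_nat_mul (m : nat) z : Cexp (RtoC (INR m) * z) = (Cexp z ^ m)%C.
Proof.
  induction m. simpl. replace (RtoC 0 * z)%C with (RtoC 0) by ring. apply Cexp_0.
  rewrite S_INR, RtoC_plus, Cmult_plus_distr_r, Cmult_1_l, Cexp_add, IHm. simpl. ring.
Qed.

Lemma C2_nz : RtoC 2 <> RtoC 0.
Proof. intro H; apply RtoC_inj in H; lra. Qed.

Lemma RtoC_opp a : RtoC (- a) = (- RtoC a)%C.
Proof. apply injective_projections; simpl; ring. Qed.
Lemma RtoC_div2 a : RtoC (a / 2) = (RtoC a / 2)%C.
Proof. unfold Rdiv. rewrite RtoC_mult, RtoC_inv by lra. auto. Qed.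

Lemma RtoC_div x y : y <> 0 -> RtoC (x / y) = (RtoC x / RtoC y)%C.
Proof. intro. unfold Rdiv. rewrite RtoC_mult, RtoC_inv by auto. auto. Qed.

Lemma exp_half_sq b : exp b = exp (b / 2) * exp (b / 2).
Proof. rewrite <- exp_plus. f_equal. field. Qed.

Lemma cosh_fact (a : C) (b : R) :
  (Cexp a + RtoC (exp b))%C <> RtoC 0 ->
  (/ (2 * Ccosh ((a - RtoC b) / 2)))%C =
  (Cexp (a / 2) * RtoC (exp (b / 2)) / (Cexp a + RtoC (exp b)))%C.
Proof.
  intro Hnz. unfold Ccosh.
  set (h := Cexp (a / 2)). set (e := exp (b / 2)).
  assert (E1 : Cexp ((a - RtoC b) / 2) = (h * / RtoC e)%C).
  { replace ((a - RtoC b) / 2)%C with (a / 2 + - RtoC (b / 2))%C.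
    rewrite Cexp_add, Cexp_opp, Cexp_RtoC. auto.
    rewrite RtoC_div2. field; apply C2_nz. }
  assert (E2 : Cexp (- ((a - RtoC b) / 2)) = (/ h * RtoC e)%C).
  { replace (- ((a - RtoC b) / 2))%C with (- (a / 2) + RtoC (b / 2))%C.
    rewrite Cexp_add, Cexp_opp, Cexp_RtoC. auto.
    rewrite RtoC_div2. field; apply C2_nz. }
  assert (E3 : Cexp a = (h * h)%C).
  { unfold h. rewrite <- Cexp_add. f_equal. field; apply C2_nz. }
  assert (E4 : RtoC (exp b) = (RtoC e * RtoC e)%C).
  { unfold e. rewrite <- RtoC_mult, <- exp_half_sq. auto. }
  rewrite E1, E2. rewrite E3, E4 in *.
  assert (h <> RtoC 0) by apply Cexp_nz.
  assert (RtoC e <> RtoC 0) by (intro H'; apply RtoC_inj in H'; pose proof (exp_pos (b/2)); unfold e in H'; lra).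
  field. repeat split; auto.
Qed.

Lemma sinh_fact (a : C) (b : R) :
  (Cexp a - RtoC (exp b))%C <> RtoC 0 ->
  (/ (2 * Csinh ((a - RtoC b) / 2)))%C =
  (Cexp (a / 2) * RtoC (exp (b / 2)) / (Cexp a - RtoC (exp b)))%C.
Proof.
  intro Hnz. unfold Csinh.
  set (h := Cexp (a / 2)). set (e := exp (b / 2)).
  assert (E1 : Cexp ((a - RtoC b) / 2) = (h * / RtoC e)%C).
  { replace ((a - RtoC b) / 2)%C with (a / 2 + - RtoC (b / 2))%C.
    rewrite Cexp_add, Cexp_opp, Cexp_RtoC. auto.
    rewrite RtoC_div2. field; apply C2_nz. }
  assert (E2 : Cexp (- ((a - RtoC b) / 2)) = (/ h * RtoC e)%C).
  { replace (- ((a - RtoC b) / 2))%C with (- (a / 2) + RtoC (b / 2))%C.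
    rewrite Cexp_add, Cexp_opp, Cexp_RtoC. auto.
    rewrite RtoC_div2. field; apply C2_nz. }
  assert (E3 : Cexp a = (h * h)%C).
  { unfold h. rewrite <- Cexp_add. f_equal. field; apply C2_nz. }
  assert (E4 : RtoC (exp b) = (RtoC e * RtoC e)%C).
  { unfold e. rewrite <- RtoC_mult, <- exp_half_sq. auto. }
  rewrite E1, E2. rewrite E3, E4 in *.
  assert (h <> RtoC 0) by apply Cexp_nz.
  assert (RtoC e <> RtoC 0) by (intro H'; apply RtoC_inj in H'; pose proof (exp_pos (b/2)); unfold e in H'; lra).
  field. repeat split; auto.
Qed.

Lemma zrange_nil a b : (b < a)%Z -> zrange a b = nil.
Proof. intro H. unfold zrange. replace (Z.to_nat (b - a + 1)) with 0%nat by lia. auto. Qed.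
Lemma zrange_cons a b : (a <= b)%Z -> zrange a b = a :: zrange (a + 1) b.
Proof.
  intro H. unfold zrange.
  replace (Z.to_nat (b - a + 1)) with (S (Z.to_nat (b - (a + 1) + 1))) by lia.
  simpl. f_equal. lia. rewrite <- seq_shift, map_map. apply map_ext. intro m. lia.
Qed.
Lemma zrange_length a b : length (zrange a b) = Z.to_nat (b - a + 1).
Proof. unfold zrange. rewrite length_map, length_seq. auto. Qed.
Lemma In_zrange j a b : In j (zrange a b) <-> (a <= j <= b)%Z.
Proof.
  unfold zrange. rewrite in_map_iff. split.
  - intros [m [H1 H2]]. apply in_seq in H2. lia.
  - intro H. exists (Z.to_nat (j - a)). split. lia. apply in_seq. lia.
Qed.
Lemma zrange_app a m b : (a <= m + 1)%Z -> (m <= b)%Z ->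
  zrange a b = zrange a m ++ zrange (m + 1) b.
Proof.
  intros H1 H2. remember (Z.to_nat (m + 1 - a)) as n eqn:En.
  revert a H1 En. induction n; intros a H1 En.
  - assert (a = m + 1)%Z by lia. subst. rewrite (zrange_nil (m+1) m) by lia. auto.
  - rewrite (zrange_cons a b) by lia. rewrite (zrange_cons a m) by lia.
    simpl. f_equal. apply IHn; lia.
Qed.
Lemma zrange_single a : zrange a a = a :: nil.
Proof. rewrite zrange_cons by lia. rewrite zrange_nil by lia. auto. Qed.

Lemma Pc_app l1 l2 x : Pc (l1 ++ l2) x = (Pc l1 x * Pc l2 x)%C.
Proof. induction l1; simpl. ring. rewrite IHl1. ring. Qed.

Lemma prod_fact (L : list Z) (h x : C) (e a : Z -> R) :
  (forall j, In j L -> x <> RtoC (a j)) ->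
  fold_right (fun j acc => (h * RtoC (e j) / (x - RtoC (a j)) * acc)%C) (RtoC 1) L =
  (h ^ length L * RtoC (fold_right (fun j acc => (e j * acc)%R) 1%R L)
     / Pc (map (fun j => RtoC (a j)) L) x)%C.
Proof.
  induction L as [|j L IH]; intros H; simpl. field.
  rewrite IH by (intros; apply H; right; auto). rewrite RtoC_mult.
  assert (Pc (map (fun j => RtoC (a j)) L) x <> 0).
  { apply Pc_nz. intro H'. apply in_map_iff in H'. destruct H' as [j' [E Hj']].
    apply (H j'). right; auto. auto. }
  assert (x - RtoC (a j) <> 0)%C by (apply sub_nz; apply H; left; auto).
  field. auto.
Qed.

Lemma fold_C_ext (L : list Z) (f g : Z -> C) :
  (forall j, In j L -> f j = g j) ->
  fold_right (fun j acc => (f j * acc)%C) (RtoC 1) L =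
  fold_right (fun j acc => (g j * acc)%C) (RtoC 1) L.
Proof. induction L; simpl; intros; auto. rewrite H, IHL; auto. Qed.

Lemma fold_R_app (L1 L2 : list Z) (f : Z -> R) :
  fold_right (fun j acc => f j * acc) 1 (L1 ++ L2) =
  fold_right (fun j acc => f j * acc) 1 L1 * fold_right (fun j acc => f j * acc) 1 L2.
Proof. induction L1; simpl. ring. rewrite IHL1. ring. Qed.

Definition rtsC (r s i : Z) (beta : Z -> R) : list C :=
  map (fun j => RtoC (- BB beta j)) (zrange r i) ++ map (fun j => RtoC (BB beta j)) (zrange i s).

Lemma integrand_eq r s beta k i (al : C) :
  (r <= i <= s)%Z -> (1 <= k)%Z ->
  (forall j, Cexp al <> RtoC (BB beta j) /\ Cexp al <> RtoC (- BB beta j)) ->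
  integrandI r s beta k i al =
  (RtoC (exp (beta i / 2) * zprodR r s (fun j => exp (beta j / 2)) / (2 * PI))%R *
   (Cexp al ^ Z.to_nat k / Pc (rtsC r s i beta) (Cexp al)))%C.
Proof.
  intros Hi Hk Hx. unfold integrandI, zprodC.
  set (x := Cexp al). set (h := Cexp (al / 2)).
  rewrite (fold_C_ext (zrange r i) _ (fun j => h * RtoC (exp (beta j / 2)) / (x - RtoC (- BB beta j)))%C).
  2:{ intros j _. rewrite cosh_fact. unfold x, h, BB. rewrite RtoC_opp. f_equal. ring.
      intro H'. apply (proj2 (Hx j)). change (Cexp al) with x in H'. unfold BB. rewrite RtoC_opp.
      transitivity (Cexp al + RtoC (exp (beta j)) - RtoC (exp (beta j)))%C. ring. change (Cexp al) with x. rewrite H'. ring. }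
  rewrite (fold_C_ext (zrange i s) _ (fun j => h * RtoC (exp (beta j / 2)) / (x - RtoC (BB beta j)))%C).
  2:{ intros j _. rewrite sinh_fact. unfold x, h, BB. auto.
      intro H'. apply (proj1 (Hx j)). change (Cexp al) with x in H'. unfold BB.
      transitivity (Cexp al - RtoC (exp (beta j)) + RtoC (exp (beta j)))%C. ring. change (Cexp al) with x. rewrite H'. ring. }
  rewrite !prod_fact.
  2:{ intros; apply Hx. }
  2:{ intros; apply Hx. }
  rewrite !zrange_length.
  set (N := Z.to_nat (nn r s)). set (K := Z.to_nat k).
  assert (HN : (Z.to_nat (i - r + 1) + Z.to_nat (s - i + 1) = S N)%nat) by (unfold N, nn; lia).
  assert (Hc : (Cexp ((RtoC (IZR k) - (RtoC (IZR (nn r s)) + 1) / 2) * al) * h ^ (S N))%C = (x ^ K)%C).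
  { unfold h, x. rewrite <- !Cexp_nat_mul, <- Cexp_add. f_equal.
    replace (IZR k) with (INR K) by (unfold K; rewrite INR_IZR_INZ; f_equal; lia).
    replace (IZR (nn r s)) with (INR N) by (unfold N, nn; rewrite INR_IZR_INZ; f_equal; lia).
    rewrite S_INR, RtoC_plus. field; apply C2_nz. }
  assert (Hh : h <> RtoC 0) by apply Cexp_nz.
  assert (Hce : Cexp ((RtoC (IZR k) - (RtoC (IZR (nn r s)) + 1) / 2) * al) = (x ^ K / h ^ (S N))%C).
  { rewrite <- Hc. field. apply Cpow_nz. auto. }
  rewrite Hce.
  unfold rtsC. rewrite Pc_app.
  assert (HE : fold_right (fun j acc => exp (beta j / 2) * acc) 1 (zrange r i) *
               fold_right (fun j acc => exp (beta j / 2) * acc) 1 (zrange i s) =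
               exp (beta i / 2) * zprodR r s (fun j => exp (beta j / 2))).
  { unfold zprodR. rewrite (zrange_app r (i - 1) s) by lia.
    rewrite (zrange_app r (i - 1) i) by lia. replace (i - 1 + 1)%Z with i by lia.
    rewrite !fold_R_app, zrange_single. simpl. ring. }
  assert (HP1 : Pc (map (fun j => RtoC (- BB beta j)) (zrange r i)) x <> 0).
  { apply Pc_nz. intro H'. apply in_map_iff in H'. destruct H' as [j' [E _]].
    apply (proj2 (Hx j')). auto. }
  assert (HP2 : Pc (map (fun j => RtoC (BB beta j)) (zrange i s)) x <> 0).
  { apply Pc_nz. intro H'. apply in_map_iff in H'. destruct H' as [j' [E _]].
    apply (proj1 (Hx j')). auto. }
  rewrite <- HE, RtoC_div, !RtoC_mult.
  2:{ pose proof PI_RGT_0. nra. }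
  rewrite <- HN, Cpow_add_r.
  assert (RtoC PI <> 0) by (intro H'; apply RtoC_inj in H'; pose proof PI_RGT_0; lra).
  field. repeat split; auto; try apply Cpow_nz; auto; apply C2_nz.
Qed.

Definition pp eps a t := exp t * cos eps - a.
Definition qq eps t := exp t * sin eps.
Definition nr eps a t := pp eps a t ^ 2 + qq eps t ^ 2.
Definition Rg eps a t := (pp eps a t * (pp eps a t + a) + qq eps t ^ 2) / nr eps a t.
Definition Ig eps a t := - a * qq eps t / nr eps a t.
Definition Lre eps a t := ln (nr eps a t) / 2.
Definition LimF eps a t := PI / 2 - atan (pp eps a t / qq eps t).

Section S.
Variable eps : R.
Hypothesis Heps : 0 < eps < PI.

Lemma sin_eps_pos : 0 < sin eps.
Proof. apply sin_gt_0; lra. Qed.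

Lemma qq_pos t : 0 < qq eps t.
Proof. unfold qq. pose proof (exp_pos t). pose proof sin_eps_pos. nra. Qed.
Lemma nr_pos a t : 0 < nr eps a t.
Proof. unfold nr. pose proof (qq_pos t). nra. Qed.

Lemma Lre_deriv a t : is_derive (Lre eps a) t (Rg eps a t).
Proof.
  unfold Lre, Rg, nr, pp, qq. pose proof (nr_pos a t) as H. unfold nr, pp, qq in H.
  auto_derive. lra. field. lra.
Qed.

Lemma Lim_deriv a t : is_derive (LimF eps a) t (Ig eps a t).
Proof.
  unfold LimF, Ig, nr, pp, qq. pose proof (nr_pos a t) as H. pose proof (qq_pos t) as Hq.
  unfold nr, pp, qq in H, Hq.
  auto_derive. intro HH; rewrite HH in Hq; lra. field. split; [lra|split]; intro HH; rewrite HH in Hq; lra.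
Qed.

Lemma Rg_cont a t : continuous (Rg eps a) t.
Proof.
  apply (ex_derive_continuous (K := R_AbsRing) (V := R_NormedModule)). unfold Rg, nr, pp, qq.
  pose proof (nr_pos a t) as H. unfold nr, pp, qq in H. auto_derive. lra.
Qed.
Lemma Ig_cont a t : continuous (Ig eps a) t.
Proof.
  apply (ex_derive_continuous (K := R_AbsRing) (V := R_NormedModule)). unfold Ig, nr, pp, qq.
  pose proof (nr_pos a t) as H. unfold nr, pp, qq in H. auto_derive. lra.
Qed.

Lemma lim_expm : filterlim (fun t => exp (- t)) (Rbar_locally p_infty) (locally 0).
Proof.
  eapply filterlim_comp. 2: apply is_lim_exp_m.
  intros P [M HM]. exists (- M). intros x Hx. apply HM. lra.
Qed.
Lemma lim_exp : filterlim (fun t => exp t) (Rbar_locally m_infty) (locally 0).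
Proof. apply is_lim_exp_m. Qed.

Lemma cont_lim_p (G : R -> R) : continuous G 0 ->
  filterlim (fun t => G (exp (- t))) (Rbar_locally p_infty) (locally (G 0)).
Proof. intro H. eapply filterlim_comp. apply lim_expm. apply H. Qed.
Lemma cont_lim_m (G : R -> R) : continuous G 0 ->
  filterlim (fun t => G (exp t)) (Rbar_locally m_infty) (locally (G 0)).
Proof. intro H. eapply filterlim_comp. apply lim_exp. apply H. Qed.

Lemma exp_inv_prod t : exp t * exp (- t) = 1.
Proof. rewrite <- exp_plus. replace (t + - t) with 0 by ring. apply exp_0. Qed.

Lemma g_pos a u : 0 < (cos eps - a * u) ^ 2 + sin eps ^ 2.
Proof. pose proof sin_eps_pos. assert (0 < sin eps ^ 2) by (apply pow_lt; lra). assert (0 <= (cos eps - a * u) ^ 2) by (apply pow2_ge_0). lra. Qed.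

Lemma Lre_lim_p a : filterlim (fun t => Lre eps a t - t) (Rbar_locally p_infty) (locally 0).
Proof.
  set (G := fun u => ln ((cos eps - a * u) ^ 2 + sin eps ^ 2) / 2).
  assert (HG0 : G 0 = 0).
  { unfold G. replace ((cos eps - a * 0) ^ 2 + sin eps ^ 2) with 1.
    rewrite ln_1. lra. pose proof (sin2_cos2 eps). unfold Rsqr in *. nra. }
  rewrite <- HG0. apply (filterlim_ext (fun t => G (exp (- t)))).
  { intro t. unfold G, Lre, nr, pp, qq.
    pose proof (exp_inv_prod t). 
    replace ((exp t * cos eps - a) ^ 2 + (exp t * sin eps) ^ 2) with
      (exp (2 * t) * ((cos eps - a * exp (- t)) ^ 2 + sin eps ^ 2)).
    rewrite ln_mult, ln_exp. field. apply exp_pos. apply g_pos.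
    replace (2 * t) with (t + t) by ring. rewrite exp_plus.
    replace (exp t * cos eps - a) with (exp t * (cos eps - a * exp (- t))).
    ring. replace (exp t * (cos eps - a * exp (- t))) with (exp t * cos eps - a * (exp t * exp (- t))) by ring.
    rewrite H. ring. }
  apply cont_lim_p. apply (ex_derive_continuous (K := R_AbsRing) (V := R_NormedModule)).
  unfold G. auto_derive. apply g_pos.
Qed.

Lemma atan_cot : atan (cos eps / sin eps) = PI / 2 - eps.
Proof.
  rewrite <- (atan_tan (PI / 2 - eps)) by lra. f_equal. unfold tan.
  rewrite sin_shift, cos_shift. auto.
Qed.

Lemma Lim_lim_p a : filterlim (fun t => LimF eps a t) (Rbar_locally p_infty) (locally eps).
Proof.
  pose proof sin_eps_pos as Hs.
  set (G := fun u => PI / 2 - atan ((cos eps - a * u) / sin eps)).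
  assert (HG0 : G 0 = eps).
  { unfold G. replace ((cos eps - a * 0) / sin eps) with (cos eps / sin eps) by (field; lra).
    rewrite atan_cot. ring. }
  assert (Hl : filterlim (fun t => G (exp (- t))) (Rbar_locally p_infty) (locally (G 0))).
  { apply cont_lim_p. apply (ex_derive_continuous (K := R_AbsRing) (V := R_NormedModule)).
    unfold G. auto_derive. lra. }
  rewrite HG0 in Hl. eapply filterlim_ext; [|exact Hl].
  { intro t. unfold G, LimF, pp, qq. f_equal. f_equal.
    pose proof (exp_inv_prod t). pose proof (exp_pos t).
    assert (E : exp t * cos eps - a = exp t * (cos eps - a * exp (- t))).
    { replace (exp t * (cos eps - a * exp (- t))) with (exp t * cos eps - a * (exp t * exp (- t))) by ring.
      rewrite H. ring. }
    rewrite E. field. split; lra. }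
Qed.

Lemma Lre_lim_m a : a <> 0 ->
  filterlim (fun t => Lre eps a t) (Rbar_locally m_infty) (locally (ln (a ^ 2) / 2)).
Proof.
  intro Ha.
  set (G := fun v => ln ((v * cos eps - a) ^ 2 + (v * sin eps) ^ 2) / 2).
  assert (HG0 : G 0 = ln (a ^ 2) / 2).
  { unfold G. f_equal. f_equal. ring. }
  rewrite <- HG0. apply (filterlim_ext (fun t => G (exp t))).
  { intro t. unfold G, Lre, nr, pp, qq. auto. }
  apply cont_lim_m. apply (ex_derive_continuous (K := R_AbsRing) (V := R_NormedModule)).
  unfold G. auto_derive. nra.
Qed.

Lemma pp_lim_m a : filterlim (fun t => pp eps a t) (Rbar_locally m_infty) (locally (- a)).
Proof.
  assert (Hl : filterlim (fun t => (fun v => v * cos eps - a) (exp t)) (Rbar_locally m_infty)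
     (locally ((fun v => v * cos eps - a) 0))).
  { apply (cont_lim_m (fun v => v * cos eps - a)).
    apply (ex_derive_continuous (K := R_AbsRing) (V := R_NormedModule) (fun v => v * cos eps - a)).
    auto_derive. auto. }
  simpl in Hl. replace (0 * cos eps - a) with (- a) in Hl by ring. exact Hl.
Qed.

Lemma Gat_lim a : a <> 0 ->
  filterlim (fun t => atan (qq eps t / pp eps a t)) (Rbar_locally m_infty) (locally 0).
Proof.
  intro Ha.
  assert (Hl : filterlim (fun t => (fun v => atan (v * sin eps / (v * cos eps - a))) (exp t))
     (Rbar_locally m_infty) (locally ((fun v => atan (v * sin eps / (v * cos eps - a))) 0))).
  { apply (cont_lim_m (fun v => atan (v * sin eps / (v * cos eps - a)))).
    apply (ex_derive_continuous (K := R_AbsRing) (V := R_NormedModule) (fun v => atan (v * sin eps / (v * cos eps - a)))).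
    auto_derive. intro H. apply Ha. lra. }
  simpl in Hl. replace (0 * sin eps / (0 * cos eps - a)) with 0 in Hl by (field; auto).
  rewrite atan_0 in Hl. exact Hl.
Qed.

Lemma Lim_lim_m_neg a : a < 0 ->
  filterlim (fun t => LimF eps a t) (Rbar_locally m_infty) (locally 0).
Proof.
  intro Ha.
  assert (Hev : Rbar_locally m_infty (fun t => 0 < pp eps a t)).
  { apply (pp_lim_m a). assert (Hp : 0 < - a) by lra. exists (mkposreal _ Hp).
    intros y Hy. simpl in Hy. unfold ball in Hy; simpl in Hy. unfold AbsRing_ball, abs, minus, plus, opp in Hy.
    simpl in Hy. apply Rabs_lt_between in Hy. lra. }
  eapply filterlim_ext_loc; [|apply (Gat_lim a); lra].
  eapply filter_imp; [|exact Hev]. intros t Ht. simpl.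
  pose proof (qq_pos t).
  unfold LimF. rewrite <- (Rinv_div (qq eps t)), atan_inv. ring.
  apply Rdiv_lt_0_compat; auto.
Qed.

Lemma Lim_lim_m_pos a : 0 < a ->
  filterlim (fun t => LimF eps a t) (Rbar_locally m_infty) (locally PI).
Proof.
  intro Ha.
  assert (Hev : Rbar_locally m_infty (fun t => pp eps a t < 0)).
  { apply (pp_lim_m a (fun y => y < 0)). exists (mkposreal _ Ha).
    intros y Hy. simpl in Hy. unfold ball in Hy; simpl in Hy. unfold AbsRing_ball, abs, minus, plus, opp in Hy.
    simpl in Hy. apply Rabs_lt_between in Hy. lra. }
  assert (Hl : filterlim (fun t => PI + atan (qq eps t / pp eps a t)) (Rbar_locally m_infty) (locally PI)).
  { pose proof (filterlim_comp_2 (F := Rbar_locally m_infty) (fun _ => PI) (fun t => atan (qq eps t / pp eps a t))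
       (fun u v => plus u v) (filterlim_const PI) (Gat_lim a ltac:(lra)) (filterlim_plus (V := R_NormedModule) PI 0)) as Hl'.
    unfold plus in Hl'; simpl in Hl'. rewrite Rplus_0_r in Hl'. exact Hl'. }
  eapply filterlim_ext_loc; [|exact Hl].
  eapply filter_imp; [|exact Hev]. intros t Ht. simpl.
  pose proof (qq_pos t).
  unfold LimF.
  replace (pp eps a t / qq eps t) with (- / (- qq eps t / pp eps a t)).
  rewrite atan_opp, atan_inv.
  replace (- qq eps t / pp eps a t) with (- (qq eps t / pp eps a t)) by (field; lra).
  rewrite atan_opp. field.
  replace (- qq eps t / pp eps a t) with (qq eps t / (- pp eps a t)) by (field; lra).
  apply Rdiv_lt_0_compat; lra.
  field. split; lra.
Qed.

End S.

Definition sumR {T} (l : list T) (f : T -> R) : R := fold_right (fun a acc => f a + acc) 0 l.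

Lemma sumR_derive {T} (l : list T) (F dF : T -> R -> R) t :
  (forall a, In a l -> is_derive (F a) t (dF a t)) ->
  is_derive (fun t => sumR l (fun a => F a t)) t (sumR l (fun a => dF a t)).
Proof.
  induction l; simpl; intros H.
  - exact (is_derive_const (K := R_AbsRing) (V := R_NormedModule) 0 t).
  - apply (is_derive_plus (F a) (fun t => sumR l (fun a => F a t))).
    apply H; auto. apply IHl; intros; apply H; auto.
Qed.

Lemma sumR_cont {T} (l : list T) (F : T -> R -> R) t :
  (forall a, In a l -> continuous (F a) t) ->
  continuous (fun t => sumR l (fun a => F a t)) t.
Proof.
  induction l; simpl; intros H.
  - apply continuous_const.
  - apply (continuous_plus (F a) (fun t => sumR l (fun a => F a t))).
    apply H; auto. apply IHl; intros; apply H; auto.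
Qed.

Lemma sumR_lim {T} (l : list T) (F : T -> R -> R) (c : T -> R) (Fil : (R -> Prop) -> Prop) :
  Filter Fil ->
  (forall a, In a l -> filterlim (F a) Fil (locally (c a))) ->
  filterlim (fun t => sumR l (fun a => F a t)) Fil (locally (sumR l c)).
Proof.
  intro HF. induction l; simpl; intros H.
  - apply filterlim_const.
  - apply (filterlim_comp_2 (G := locally (c a)) (H := locally (sumR l c)) (F a) (fun t => sumR l (fun a => F a t)) (fun u v => plus u v)).
    apply H; auto. apply IHl; intros; apply H; auto.
    apply (filterlim_plus (V := R_NormedModule)).
Qed.

Lemma scal_derive (f : R -> R) w t d : is_derive f t d -> is_derive (fun t => w * f t) t (w * d).
Proof. apply is_derive_scal. Qed.
Lemma scal_cont (f : R -> R) w t : continuous f t -> continuous (fun t => w * f t) t.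
Proof.
  intro H. apply (continuous_mult (fun _ => w) f). apply continuous_const. auto.
Qed.
Lemma scal_lim (f : R -> R) w c (Fil : (R -> Prop) -> Prop) : Filter Fil ->
  filterlim f Fil (locally c) -> filterlim (fun t => w * f t) Fil (locally (w * c)).
Proof.
  intros HF H. apply (filterlim_comp_2 (G := locally w) (H := locally c) (fun _ => w) f (fun u v => mult u v)).
  apply filterlim_const. auto. apply (filterlim_mult (K := R_AbsRing)).
Qed.

Lemma RInt_gen_pair (f g : R -> R) Fa Fb l1 l2 :
  Filter Fa -> Filter Fb ->
  is_RInt_gen f Fa Fb l1 -> is_RInt_gen g Fa Fb l2 ->
  is_RInt_gen (V := C_R_NormedModule) (fun t => (f t, g t)) Fa Fb (l1, l2).
Proof.
  intros HFa HFb H1 H2 P [e HP].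
  assert (A1 := H1 (ball l1 e) (locally_ball l1 e)).
  assert (A2 := H2 (ball l2 e) (locally_ball l2 e)).
  unfold filtermapi in *.
  generalize (filter_and _ _ A1 A2). apply filter_imp.
  intros ab [[y1 [Hy1 Hb1]] [y2 [Hy2 Hb2]]].
  exists (y1, y2). split.
  - apply (is_RInt_fct_extend_pair (U := R_NormedModule) (V := R_NormedModule) (fun t => (f t, g t))); auto.
  - apply HP. split; auto.
Qed.

Lemma key_real (fr gr : R -> R) lm lp :
  (forall t, is_derive fr t (gr t)) -> (forall t, continuous gr t) ->
  filterlim fr (Rbar_locally m_infty) (locally lm) ->
  filterlim fr (Rbar_locally p_infty) (locally lp) ->
  is_RInt_gen gr (Rbar_locally m_infty) (Rbar_locally p_infty) (lp - lm).
Proof.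
  intros Hd Hc Hm Hp.
  assert (HD : forall t, Derive fr t = gr t) by (intro; apply is_derive_unique; auto).
  apply (is_RInt_gen_ext (Derive fr)).
  - apply filter_forall. intros ab x _. apply HD.
  - apply (is_RInt_gen_Derive (Fa := Rbar_locally m_infty) (Fb := Rbar_locally p_infty)); auto.
    + apply filter_forall. intros ab x _. eexists; apply Hd.
    + apply filter_forall. intros ab x _. apply (continuous_ext gr). intro; rewrite HD; auto. auto.
Qed.

Lemma key (fr fi gr gi : R -> R) lmr lmi lpr lpi :
  (forall t, is_derive fr t (gr t)) -> (forall t, is_derive fi t (gi t)) ->
  (forall t, continuous gr t) -> (forall t, continuous gi t) ->
  filterlim fr (Rbar_locally m_infty) (locally lmr) ->
  filterlim fr (Rbar_locally p_infty) (locally lpr) ->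
  filterlim fi (Rbar_locally m_infty) (locally lmi) ->
  filterlim fi (Rbar_locally p_infty) (locally lpi) ->
  is_RInt_gen (V := C_R_NormedModule) (fun t => (gr t, gi t))
    (Rbar_locally m_infty) (Rbar_locally p_infty) (lpr - lmr, lpi - lmi).
Proof.
  intros. apply RInt_gen_pair; try apply Rbar_locally_filter. apply (key_real fr); auto. apply (key_real fi); auto.
Qed.


Lemma NoDup_map_in {A B} (f : A -> B) (L : list A) :
  NoDup L -> (forall x y, In x L -> In y L -> f x = f y -> x = y) -> NoDup (map f L).
Proof.
  induction L as [|a L IH]; simpl; intros Hn Hi. constructor.
  inversion Hn; subst. constructor.
  - intro H. apply in_map_iff in H. destruct H as [b [E Hb]].
    assert (b = a) by (apply Hi; auto). subst; tauto.
  - apply IH; auto.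
Qed.

Lemma NoDup_zrange a b : NoDup (zrange a b).
Proof.
  unfold zrange. apply NoDup_map_in. apply seq_NoDup. intros; lia.
Qed.

Lemma fold_map_R {A} (f : A -> R) (g : R -> R) (L : list A) :
  fold_right (fun b acc => g b * acc) 1 (map f L) = fold_right (fun l acc => g (f l) * acc) 1 L.
Proof. induction L; simpl; auto. rewrite IHL; auto. Qed.

Lemma fold_neg {A} (f : A -> R) (L : list A) :
  fold_right (fun l acc => (- f l) * acc) 1 L = (-1) ^ length L * fold_right (fun l acc => f l * acc) 1 L.
Proof. induction L; simpl. ring. rewrite IHL. ring. Qed.

Lemma fold_ext_in {A} (f g : A -> R) (L : list A) :
  (forall l, In l L -> f l = g l) ->
  fold_right (fun l acc => f l * acc) 1 L = fold_right (fun l acc => g l * acc) 1 L.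
Proof. induction L; simpl; intros; auto. rewrite H, IHL; auto. Qed.

Lemma fold_nz {A} (f : A -> R) (L : list A) :
  (forall l, In l L -> f l <> 0) -> fold_right (fun l acc => f l * acc) 1 L <> 0.
Proof.
  induction L; simpl; intros. lra. apply Rmult_integral_contrapositive_currified; auto.
Qed.

Lemma sumR_app {T} (l1 l2 : list T) f : sumR (l1 ++ l2) f = sumR l1 f + sumR l2 f.
Proof. induction l1; simpl. ring. unfold sumR in *; simpl. rewrite IHl1. ring. Qed.
Lemma sumR_map {A B} (g : A -> B) (l : list A) f : sumR (map g l) f = sumR l (fun a => f (g a)).
Proof. induction l; simpl; auto. unfold sumR in *; simpl. rewrite IHl. auto. Qed.
Lemma sumR_ext {T} (l : list T) f g : (forall a, In a l -> f a = g a) -> sumR l f = sumR l g.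
Proof. induction l; simpl; intros; auto. unfold sumR in *; simpl. rewrite H, IHl; auto. Qed.
Lemma sumR_scal {T} (l : list T) c f : sumR l (fun a => c * f a) = c * sumR l f.
Proof. induction l; unfold sumR in *; simpl. ring. rewrite IHl. ring. Qed.
Lemma sumR_plus {T} (l : list T) f g : sumR l (fun a => f a + g a) = sumR l f + sumR l g.
Proof. induction l; unfold sumR in *; simpl. ring. rewrite IHl. ring. Qed.

Lemma filter_true_id {A} (l : list A) : filter (fun _ => true) l = l.
Proof. induction l; simpl; f_equal; auto. Qed.

Lemma filter_zrange_ne a b j : (a <= j <= b)%Z ->
  filter (fun l => negb (Z.eqb l j)) (zrange a b) = zrange a (j - 1) ++ zrange (j + 1) b.
Proof.
  intro H. rewrite (zrange_app a (j - 1) b) by lia. replace (j - 1 + 1)%Z with j by lia.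
  rewrite (zrange_cons j b) by lia. rewrite filter_app. simpl. rewrite Z.eqb_refl. simpl.
  f_equal.
  - rewrite filter_ext_in with (g := fun _ => true). apply filter_true_id.
    intros x Hx. apply In_zrange in Hx. destruct (Z.eqb_spec x j); simpl; auto; lia.
  - rewrite filter_ext_in with (g := fun _ => true). apply filter_true_id.
    intros x Hx. apply In_zrange in Hx. destruct (Z.eqb_spec x j); simpl; auto; lia.
Qed.

Lemma length_filter_zrange a b j : (a <= j <= b)%Z ->
  length (filter (fun l => negb (Z.eqb l j)) (zrange a b)) = Z.to_nat (b - a).
Proof.
  intro H. rewrite filter_zrange_ne, length_app, !zrange_length by auto. lia.
Qed.

Definition neqR (a b : R) : bool := if Req_EM_T b a then false else true.

Lemma rmC_map a l : rmC (RtoC a) (map RtoC l) = map RtoC (filter (neqR a) l).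
Proof.
  induction l as [|b l IH]; simpl; auto. unfold rmC in *. simpl. unfold neqR at 1.
  destruct (Req_EM_T b a) as [E|E].
  - subst. rewrite Ceqb_refl. simpl. auto.
  - rewrite Ceqb_false. simpl. f_equal. auto. intro H. apply RtoC_inj in H. auto.
Qed.

Lemma Pc_map a l : Pc (map RtoC l) (RtoC a) = RtoC (fold_right (fun b acc => (a - b) * acc) 1 l).
Proof.
  induction l as [|b l IH]; simpl; auto. rewrite IH, RtoC_mult, RtoC_minus. auto.
Qed.

Lemma sumC_map_R {A} (l : list A) (f : A -> R) : sumC l (fun a => RtoC (f a)) = RtoC (sumR l f).
Proof. induction l; unfold sumC, sumR in *; simpl; auto. rewrite IHl, RtoC_plus. auto. Qed.

Lemma sumC_map {A B} (g : A -> B) (l : list A) f : sumC (map g l) f = sumC l (fun a => f (g a)).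
Proof. induction l; unfold sumC in *; simpl; auto. rewrite IHl. auto. Qed.

Definition DpR (l : list R) (a : R) : R := fold_right (fun b acc => (a - b) * acc) 1 (filter (neqR a) l).

Lemma DpR_nz l a : DpR l a <> 0.
Proof.
  unfold DpR. apply fold_nz. intros b Hb. apply filter_In in Hb. destruct Hb as [_ Hb].
  unfold neqR in Hb. destruct (Req_EM_T b a); try discriminate. lra.
Qed.

Lemma coef_C l q a :
  RtoC (a ^ q / DpR l a) = ((RtoC a) ^ q / Pc (rmC (RtoC a) (map RtoC l)) (RtoC a))%C.
Proof.
  rewrite rmC_map, Pc_map, RtoC_div, RtoC_pow. auto. apply DpR_nz.
Qed.

Lemma Tsum_R l q : NoDup l -> (S (S q) <= length l)%nat ->
  sumR l (fun a => a ^ q / DpR l a) = 0.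
Proof.
  intros Hn Hl. apply RtoC_inj. rewrite <- sumC_map_R.
  rewrite (sumC_ext _ _ (fun a => (RtoC a ^ q / Pc (rmC (RtoC a) (map RtoC l)) (RtoC a))%C))
    by (intros; apply coef_C).
  rewrite <- (sumC_map RtoC l (fun a => (a ^ q / Pc (rmC a (map RtoC l)) a)%C)).
  apply (Tsum_zero (map RtoC l) q Ci).
  - apply NoDup_map_in; auto. intros x y _ _ H. apply RtoC_inj; auto.
  - intro H. apply in_map_iff in H. destruct H as [x [E _]]. injection E. lra.
  - rewrite length_map. auto.
Qed.

Lemma alpha_pair t e : (RtoC t + RtoC e * Ci)%C = (t, e).
Proof. apply injective_projections; simpl; ring. Qed.

Lemma x_form t e : Cexp (RtoC t + RtoC e * Ci)%C = (exp t * cos e, exp t * sin e).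
Proof. rewrite alpha_pair. reflexivity. Qed.

Lemma frac_form e a t : 0 < e < PI ->
  let x := ((exp t * cos e)%R, (exp t * sin e)%R) : C in (x / (x - RtoC a))%C = (Rg e a t, Ig e a t).
Proof.
  intros He x. unfold x. pose proof (nr_pos e He a t) as H. unfold nr, pp, qq in H.
  unfold Rg, Ig, nr, pp, qq.
  apply injective_projections; unfold Cdiv, Cminus, Cplus, Copp, Cinv, Cmult, RtoC; simpl; field; nra.
Qed.

Lemma sumC_pair {A} (l : list A) (c u v : A -> R) :
  sumC l (fun a => (RtoC (c a) * (u a, v a))%C) = (sumR l (fun a => c a * u a), sumR l (fun a => c a * v a)).
Proof.
  induction l; unfold sumC, sumR in *; simpl. auto.
  rewrite IHl. apply injective_projections; simpl; ring.
Qed.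

Section Main.
Variables (r s : Z) (beta : Z -> R) (k i : Z).
Hypothesis Hi : (r <= i <= s)%Z.
Hypothesis Hinj : forall j1 j2 : Z, (r <= j1 <= s)%Z -> (r <= j2 <= s)%Z ->
       beta j1 = beta j2 -> j1 = j2.
Hypothesis Hk : (1 <= k <= nn r s)%Z.

Definition L1 := zrange r i.
Definition L2 := zrange i s.
Definition rts := map (fun j => - BB beta j) L1 ++ map (BB beta) L2.
Definition qk := Z.to_nat (k - 1).
Definition w (a : R) := a ^ qk / DpR rts a.
Definition Kp := exp (beta i / 2) * zprodR r s (fun j => exp (beta j / 2)) / (2 * PI).
Definition nN := Z.to_nat (nn r s).

Lemma BB_pos j : 0 < BB beta j.
Proof. apply exp_pos. Qed.

Lemma BB_inj j1 j2 : (r <= j1 <= s)%Z -> (r <= j2 <= s)%Z -> BB beta j1 = BB beta j2 -> j1 = j2.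
Proof. intros H1 H2 E. apply Hinj; auto. apply exp_inv. auto. Qed.

Lemma rts_NoDup : NoDup rts.
Proof.
  unfold rts, L1, L2. apply NoDup_app.
  - apply NoDup_map_in. apply NoDup_zrange. intros x y Hx Hy E.
    apply In_zrange in Hx, Hy. apply BB_inj; lia || lra.
  - apply NoDup_map_in. apply NoDup_zrange. intros x y Hx Hy E.
    apply In_zrange in Hx, Hy. apply BB_inj; lia || lra.
  - intros a H1 H2. apply in_map_iff in H1, H2. destruct H1 as [x [E1 _]], H2 as [y [E2 _]].
    pose proof (BB_pos x). pose proof (BB_pos y). lra.
Qed.

Lemma rts_length : length rts = S nN.
Proof. unfold rts, L1, L2, nN, nn. rewrite length_app, !length_map, !zrange_length. lia. Qed.

Lemma rts_nz a : In a rts -> a <> 0.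
Proof.
  unfold rts. intro H. apply in_app_or in H. destruct H as [H|H]; apply in_map_iff in H;
  destruct H as [x [E _]]; subst; pose proof (BB_pos x); lra.
Qed.

Lemma w_sum0 : sumR rts w = 0.
Proof. apply Tsum_R. apply rts_NoDup. rewrite rts_length. unfold qk, nN, nn in *. lia. Qed.

Lemma qk_S : Z.to_nat k = S qk.
Proof. unfold qk. lia. Qed.

Section Eps.
Variable eps : R.
Hypothesis He : 0 < eps < PI.

Definition gr t := sumR rts (fun a => (Kp * w a) * Rg eps a t).
Definition gi t := sumR rts (fun a => (Kp * w a) * Ig eps a t).
Definition fr t := sumR rts (fun a => (Kp * w a) * Lre eps a t).
Definition fi t := sumR rts (fun a => (Kp * w a) * LimF eps a t).

Lemma integrand_pair t :
  integrandI r s beta k i (RtoC t + RtoC eps * Ci)%C = (gr t, gi t).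
Proof.
  assert (Hs : 0 < sin eps) by (apply sin_gt_0; lra).
  assert (Hx : forall a : R, Cexp (RtoC t + RtoC eps * Ci)%C <> RtoC a).
  { intros a H. rewrite x_form in H. injection H as _ H. pose proof (exp_pos t). nra. }
  rewrite integrand_eq; auto; try lia.
  replace (rtsC r s i beta) with (map RtoC rts).
  2:{ unfold rtsC, rts, L1, L2. rewrite map_app, !map_map. auto. }
  set (x := Cexp (RtoC t + RtoC eps * Ci)%C).
  assert (Hxn : ~ In x (map RtoC rts)).
  { intro H. apply in_map_iff in H. destruct H as [a [E _]]. apply (Hx a). auto. }
  assert (HND : NoDup (map RtoC rts)).
  { apply NoDup_map_in. apply rts_NoDup. intros a b _ _ E. apply RtoC_inj; auto. }
  rewrite qk_S, Cpow_S.
  assert (E1 : (x * x ^ qk / Pc (map RtoC rts) x)%C = (x * (x ^ qk / Pc (map RtoC rts) x))%C).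
  { unfold Cdiv. ring. }
  rewrite E1, PF_main; auto.
  2:{ rewrite length_map, rts_length. unfold qk, nN, nn in *. lia. }
  unfold PFsum. rewrite sumC_map.
  rewrite (sumC_ext _ _ (fun a => (RtoC (w a) / (x - RtoC a))%C)).
  2:{ intros a _. unfold w. rewrite coef_C. auto. }
  rewrite <- sumC_scal.
  rewrite (sumC_ext _ _ (fun a => (RtoC (w a) * (Rg eps a t, Ig eps a t))%C)).
  2:{ intros a Ha. assert (Hxa : (x - RtoC a)%C <> 0) by (apply sub_nz; apply Hx).
      transitivity (RtoC (w a) * (x / (x - RtoC a)))%C. field. auto.
      f_equal. unfold x. rewrite x_form. apply frac_form. auto. }
  rewrite sumC_pair. unfold gr, gi.
  rewrite (sumR_ext _ (fun a => Kp * w a * Rg eps a t) (fun a => Kp * (w a * Rg eps a t))) by (intros; ring).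
  rewrite (sumR_ext _ (fun a => Kp * w a * Ig eps a t) (fun a => Kp * (w a * Ig eps a t))) by (intros; ring).
  rewrite !sumR_scal. fold Kp.
  apply injective_projections; simpl; ring.
Qed.

Lemma sumR_zero {T} (l : list T) : sumR l (fun _ => 0) = 0.
Proof. induction l; unfold sumR in *; simpl; auto. rewrite IHl. ring. Qed.

Lemma fr_deriv t : is_derive fr t (gr t).
Proof.
  unfold fr, gr. apply (sumR_derive rts (fun a t => Kp * w a * Lre eps a t) (fun a t => Kp * w a * Rg eps a t)).
  intros a _. apply scal_derive. apply Lre_deriv. auto.
Qed.
Lemma fi_deriv t : is_derive fi t (gi t).
Proof.
  unfold fi, gi. apply (sumR_derive rts (fun a t => Kp * w a * LimF eps a t) (fun a t => Kp * w a * Ig eps a t)).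
  intros a _. apply scal_derive. apply Lim_deriv. auto.
Qed.
Lemma gr_cont t : continuous gr t.
Proof.
  unfold gr. apply (sumR_cont rts (fun a t => Kp * w a * Rg eps a t)).
  intros a _. apply scal_cont. apply Rg_cont. auto.
Qed.
Lemma gi_cont t : continuous gi t.
Proof.
  unfold gi. apply (sumR_cont rts (fun a t => Kp * w a * Ig eps a t)).
  intros a _. apply scal_cont. apply Ig_cont. auto.
Qed.

Definition Mr := sumR rts (fun a => Kp * w a * (ln (a ^ 2) / 2)).
Definition Mi := sumR rts (fun a => Kp * w a * (if Rlt_dec a 0 then 0 else PI)).

Lemma fr_m : filterlim fr (Rbar_locally m_infty) (locally Mr).
Proof.
  unfold fr, Mr. apply (sumR_lim rts (fun a t => Kp * w a * Lre eps a t)). apply Rbar_locally_filter.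
  intros a Ha. apply scal_lim. apply Rbar_locally_filter. apply Lre_lim_m. auto. apply rts_nz; auto.
Qed.
Lemma fi_m : filterlim fi (Rbar_locally m_infty) (locally Mi).
Proof.
  unfold fi, Mi. apply (sumR_lim rts (fun a t => Kp * w a * LimF eps a t)). apply Rbar_locally_filter.
  intros a Ha. apply scal_lim. apply Rbar_locally_filter.
  pose proof (rts_nz a Ha). destruct (Rlt_dec a 0).
  - apply Lim_lim_m_neg; auto.
  - apply Lim_lim_m_pos; auto. lra.
Qed.
Lemma fr_p : filterlim fr (Rbar_locally p_infty) (locally 0).
Proof.
  apply (filterlim_ext (fun t => sumR rts (fun a => Kp * w a * (Lre eps a t - t)))).
  { intro t. unfold fr.
    rewrite (sumR_ext _ (fun a => Kp * w a * Lre eps a t) (fun a => Kp * w a * (Lre eps a t - t) + (t * Kp) * w a)) by (intros; ring).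
    rewrite sumR_plus, sumR_scal, w_sum0. ring. }
  rewrite <- (sumR_zero rts).
  rewrite (sumR_ext rts (fun _ => 0) (fun a => Kp * w a * 0)) by (intros; ring).
  apply (sumR_lim rts (fun a t => Kp * w a * (Lre eps a t - t))). apply Rbar_locally_filter.
  intros a Ha. apply scal_lim. apply Rbar_locally_filter. apply Lre_lim_p. auto.
Qed.
Lemma fi_p : filterlim fi (Rbar_locally p_infty) (locally 0).
Proof.
  replace 0 with (sumR rts (fun a => Kp * w a * eps)).
  2:{ rewrite (sumR_ext _ _ (fun a => (Kp * eps) * w a)) by (intros; ring). rewrite sumR_scal, w_sum0. ring. }
  unfold fi. apply (sumR_lim rts (fun a t => Kp * w a * LimF eps a t)). apply Rbar_locally_filter.
  intros a Ha. apply scal_lim. apply Rbar_locally_filter. apply Lim_lim_p. auto.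
Qed.

Lemma Ival_core :
  is_RInt_gen (V := C_R_NormedModule)
    (fun t => integrandI r s beta k i (RtoC t + RtoC eps * Ci)%C)
    (Rbar_locally m_infty) (Rbar_locally p_infty) (0 - Mr, 0 - Mi).
Proof.
  apply (is_RInt_gen_ext (fun t => (gr t, gi t))).
  - apply filter_forall. intros ab t _. rewrite integrand_pair. auto.
  - apply (key fr fi gr gi).
    + apply fr_deriv.
    + apply fi_deriv.
    + apply gr_cont.
    + apply gi_cont.
    + apply fr_m.
    + apply fr_p.
    + apply fi_m.
    + apply fi_p.
Qed.

End Eps.

Lemma fold_app_R (l1 l2 : list R) (g : R -> R) :
  fold_right (fun b acc => g b * acc) 1 (l1 ++ l2) =
  fold_right (fun b acc => g b * acc) 1 l1 * fold_right (fun b acc => g b * acc) 1 l2.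
Proof. induction l1; simpl. ring. rewrite IHl1. ring. Qed.

Lemma DpR_neg j : (r <= j <= i)%Z ->
  DpR rts (- BB beta j) = (-1) ^ nN *
    (zprodR_ne r i j (fun l => BB beta j - BB beta l) * zprodR i s (fun l => BB beta j + BB beta l)).
Proof.
  intro Hj. unfold DpR, rts. rewrite filter_app, !filter_map_swap.
  rewrite (filter_ext_in _ (fun l => negb (Z.eqb l j)) L1).
  2:{ intros l Hl. unfold L1 in Hl. apply In_zrange in Hl. unfold neqR.
      destruct (Req_EM_T (- BB beta l) (- BB beta j)) as [E|E]; destruct (Z.eqb_spec l j); simpl; auto.
      exfalso. apply n. apply BB_inj; try lia. lra. subst. tauto. }
  rewrite (filter_ext_in _ (fun _ => true) L2).
  2:{ intros l _. unfold neqR. destruct (Req_EM_T (BB beta l) (- BB beta j)); auto.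
      pose proof (BB_pos l). pose proof (BB_pos j). lra. }
  rewrite filter_true_id, fold_app_R, !fold_map_R.
  rewrite (fold_ext_in (fun l => - BB beta j - - BB beta l) (fun l => - (BB beta j - BB beta l))) by (intros; ring).
  rewrite (fold_ext_in (fun l => - BB beta j - BB beta l) (fun l => - (BB beta j + BB beta l))) by (intros; ring).
  rewrite !fold_neg. unfold zprodR_ne, zprodR. fold L1. fold L2.
  unfold L1, L2. rewrite length_filter_zrange by lia. rewrite zrange_length.
  replace nN with (Z.to_nat (i - r) + Z.to_nat (s - i + 1))%nat by (unfold nN, nn; lia).
  rewrite pow_add. ring.
Qed.

Lemma DpR_pos j : (i <= j <= s)%Z ->
  DpR rts (BB beta j) =
    zprodR r i (fun l => BB beta j + BB beta l) * zprodR_ne i s j (fun l => BB beta j - BB beta l).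
Proof.
  intro Hj. unfold DpR, rts. rewrite filter_app, !filter_map_swap.
  rewrite (filter_ext_in _ (fun l => negb (Z.eqb l j)) L2).
  2:{ intros l Hl. unfold L2 in Hl. apply In_zrange in Hl. unfold neqR.
      destruct (Req_EM_T (BB beta l) (BB beta j)) as [E|E]; destruct (Z.eqb_spec l j); simpl; auto.
      exfalso. apply n. apply BB_inj; try lia. lra. subst. tauto. }
  rewrite (filter_ext_in _ (fun _ => true) L1).
  2:{ intros l _. unfold neqR. destruct (Req_EM_T (- BB beta l) (BB beta j)); auto.
      pose proof (BB_pos l). pose proof (BB_pos j). lra. }
  rewrite filter_true_id, fold_app_R, !fold_map_R.
  rewrite (fold_ext_in (fun l => BB beta j - - BB beta l) (fun l => BB beta j + BB beta l)) by (intros; ring).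
  unfold zprodR_ne, zprodR. auto.
Qed.

Lemma sign_sq : (-1) ^ nN * (-1) ^ nN = 1.
Proof. rewrite <- pow_add. replace (nN + nN)%nat with (2 * nN)%nat by lia. rewrite pow_mult. replace ((-1) ^ 2) with 1 by ring. apply pow1. Qed.

Lemma sign_nz : (-1) ^ nN <> 0.
Proof. apply pow_nonzero. lra. Qed.

Lemma w_neg j : (r <= j <= i)%Z -> w (- BB beta j) = (-1) ^ nN * ((- BB beta j) ^ qk * FF r s beta j i).
Proof.
  intro Hj. unfold w, FF. rewrite DpR_neg by auto.
  assert (zprodR_ne r i j (fun l => BB beta j - BB beta l) * zprodR i s (fun l => BB beta j + BB beta l) <> 0).
  { pose proof (DpR_nz rts (- BB beta j)). rewrite DpR_neg in H by auto.
    intro E; apply H; rewrite E; ring. }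
  pose proof sign_sq. pose proof sign_nz.
  assert (Hinv : / (-1) ^ nN = (-1) ^ nN).
  { apply Rmult_eq_reg_l with ((-1) ^ nN); auto. rewrite Rinv_r; auto. }
  unfold Rdiv. rewrite Rinv_mult, Hinv. ring.
Qed.

Lemma w_pos j : (i <= j <= s)%Z -> w (BB beta j) = (-1) ^ nN * (BB beta j ^ qk * GG r s beta j i).
Proof.
  intro Hj. unfold w, GG. rewrite DpR_pos by auto. fold nN.
  assert (zprodR r i (fun l => BB beta j + BB beta l) * zprodR_ne i s j (fun l => BB beta j - BB beta l) <> 0).
  { pose proof (DpR_nz rts (BB beta j)). rewrite DpR_pos in H by auto. auto. }
  pose proof sign_sq. pose proof sign_nz.
  assert (Hinv : / (-1) ^ nN = (-1) ^ nN).
  { apply Rmult_eq_reg_l with ((-1) ^ nN); auto. rewrite Rinv_r; auto. }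
  unfold Rdiv. rewrite <- Hinv at 2. field. split; [|split]; auto; intro E; apply H; rewrite E; ring.
Qed.

End Main.

Lemma Cpowz_succ z m : z <> RtoC 0 -> Cpowz z (m + 1) = (Cpowz z m * z)%C.
Proof.
  intro Hz. unfold Cpowz.
  destruct (Z.leb_spec 0 (m + 1)); destruct (Z.leb_spec 0 m).
  - replace (Z.to_nat (m + 1)) with (S (Z.to_nat m)) by lia. rewrite Cpow_S. ring.
  - assert (m = -1)%Z by lia. subst. simpl. field. auto.
  - lia.
  - replace (Z.to_nat (- m)) with (S (Z.to_nat (- (m + 1)))) by lia. rewrite Cpow_S.
    field. split; auto. apply Cpow_nz. auto.
Qed.

Lemma Cpowz_add_nat z m p : z <> RtoC 0 -> Cpowz z (m + Z.of_nat p) = (Cpowz z m * z ^ p)%C.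
Proof.
  intro Hz. induction p.
  - simpl. rewrite Z.add_0_r. ring.
  - replace (m + Z.of_nat (S p))%Z with ((m + Z.of_nat p) + 1)%Z by lia.
    rewrite Cpowz_succ, IHp by auto. rewrite Cpow_S. ring.
Qed.

Lemma Cpowz_nat z p : Cpowz z (Z.of_nat p) = (z ^ p)%C.
Proof. unfold Cpowz. destruct (Z.leb_spec 0 (Z.of_nat p)); try lia. rewrite Nat2Z.id. auto. Qed.

Lemma Ci_nz : Ci <> RtoC 0.
Proof. intro H. injection H. lra. Qed.
Lemma m1_nz : RtoC (-1) <> RtoC 0.
Proof. intro H. apply RtoC_inj in H. lra. Qed.

Lemma Ci2 : (Ci * Ci)%C = RtoC (-1).
Proof. apply injective_projections; simpl; ring. Qed.

Lemma Ci_even p : (Ci ^ (2 * p))%C = RtoC ((-1) ^ p).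
Proof. rewrite Cpow_mult_r. simpl. rewrite Cmult_1_r, Ci2, RtoC_pow. auto. Qed.

Lemma m1_even p : (RtoC (-1) ^ (2 * p))%C = RtoC 1.
Proof. rewrite Cpow_mult_r. simpl. rewrite Cmult_1_r. rewrite <- RtoC_mult.
  replace (-1 * -1) with 1 by ring. apply Cpow_1_l. Qed.

Lemma Cpowz_m1_odd q : Cpowz (RtoC (-1)) (2 * q + 1) = RtoC (-1).
Proof.
  destruct (Z.le_gt_cases 0 q).
  - replace (2 * q + 1)%Z with (0 + Z.of_nat (2 * Z.to_nat q + 1))%Z by lia.
    rewrite Cpowz_add_nat by apply m1_nz. rewrite Cpow_add_r, m1_even, Cpow_1_r. replace (Cpowz (RtoC (-1)) 0) with (RtoC 1) by reflexivity. ring.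
  - assert (E : Cpowz (RtoC (-1)) ((2 * q + 1) + Z.of_nat (2 * Z.to_nat (- q))) = RtoC (-1)).
    { replace ((2 * q + 1) + Z.of_nat (2 * Z.to_nat (- q)))%Z with 1%Z by lia. change (Cpowz (RtoC (-1)) 1) with (RtoC (-1) ^ 1)%C. apply Cpow_1_r. }
    rewrite Cpowz_add_nat, m1_even in E by apply m1_nz. rewrite Cmult_1_r in E. exact E.
Qed.

Lemma sqrt_prod_exp (L : list Z) (beta : Z -> R) :
  fold_right (fun j acc => exp (beta j / 2) * acc) 1 L =
  sqrt (fold_right (fun j acc => BB beta j * acc) 1 L) /\
  0 < fold_right (fun j acc => BB beta j * acc) 1 L.
Proof.
  induction L; simpl. rewrite sqrt_1. split; auto; lra.
  destruct IHL as [E P]. split.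
  - rewrite sqrt_mult_alt. rewrite <- E. f_equal. unfold BB. rewrite (exp_half_sq (beta a)).
    rewrite sqrt_square; auto. left; apply exp_pos. left; apply exp_pos.
  - apply Rmult_lt_0_compat; auto. apply exp_pos.
Qed.

Lemma ln_BB2 beta j : ln (BB beta j ^ 2) / 2 = beta j.
Proof. unfold BB. replace (exp (beta j) ^ 2) with (exp (2 * beta j)). rewrite ln_exp. field.
  replace (2 * beta j) with (beta j + beta j) by ring. rewrite exp_plus. ring. Qed.
Lemma ln_mBB2 beta j : ln ((- BB beta j) ^ 2) / 2 = beta j.
Proof. replace ((- BB beta j) ^ 2) with (BB beta j ^ 2) by ring. apply ln_BB2. Qed.

Section Fin.
Variables (r s : Z) (beta : Z -> R) (k i : Z).
Hypothesis Hi : (r <= i <= s)%Z.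
Hypothesis Hinj : forall j1 j2 : Z, (r <= j1 <= s)%Z -> (r <= j2 <= s)%Z ->
       beta j1 = beta j2 -> j1 = j2.
Hypothesis Hk : (1 <= k <= nn r s)%Z.

Definition U := sumR (zrange r i) (fun j => (- BB beta j) ^ qk k * beta j * FF r s beta j i)
  + sumR (zrange i s) (fun j => BB beta j ^ qk k * beta j * GG r s beta j i).
Definition V := sumR (zrange i s) (fun j => BB beta j ^ qk k * GG r s beta j i).
Definition W1 := sumR (zrange r i) (fun j => (- BB beta j) ^ qk k * FF r s beta j i).

Lemma Mr_eq : Mr r s beta k i = Kp r s beta i * (-1) ^ nN r s * U.
Proof.
  unfold Mr, rts, U. rewrite sumR_app, !sumR_map. rewrite Rmult_plus_distr_l, <- !sumR_scal.
  f_equal; apply sumR_ext; intros j Hj; unfold L1, L2 in Hj; apply In_zrange in Hj.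
  - rewrite w_neg by (auto || lia). rewrite ln_mBB2. ring.
  - rewrite w_pos by (auto || lia). rewrite ln_BB2. ring.
Qed.

Lemma Mi_eq : Mi r s beta k i = Kp r s beta i * (-1) ^ nN r s * PI * V.
Proof.
  unfold Mi, rts, V. rewrite sumR_app, !sumR_map. rewrite <- !sumR_scal.
  rewrite (sumR_ext _ _ (fun _ => 0)). rewrite sumR_zero, Rplus_0_l.
  - apply sumR_ext; intros j Hj; unfold L1, L2 in Hj; apply In_zrange in Hj.
    rewrite w_pos by (auto || lia). destruct (Rlt_dec (BB beta j) 0).
    pose proof (BB_pos beta j). lra. ring.
  - intros j Hj. destruct (Rlt_dec (- BB beta j) 0). ring. pose proof (BB_pos beta j). lra.
Qed.

Lemma W_eq : W1 + V = 0.
Proof.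
  pose proof (w_sum0 r s beta k i Hi Hinj Hk) as H.
  unfold rts in H. rewrite sumR_app, !sumR_map in H.
  rewrite (sumR_ext _ _ (fun j => (-1) ^ nN r s * ((- BB beta j) ^ qk k * FF r s beta j i))) in H.
  rewrite (sumR_ext (L2 s i) _ (fun j => (-1) ^ nN r s * (BB beta j ^ qk k * GG r s beta j i))) in H.
  rewrite !sumR_scal in H. unfold W1, V. unfold L1, L2 in H.
  pose proof (sign_nz r s).
  apply (Rmult_eq_reg_l ((-1) ^ nN r s)); auto. lra.
  - intros j Hj; unfold L2 in Hj; apply In_zrange in Hj. apply w_pos; auto; lia.
  - intros j Hj; unfold L1 in Hj; apply In_zrange in Hj. apply w_neg; auto; lia.
Qed.

End Fin.

Lemma zsumC_sumC a b f : zsumC a b f = sumC (zrange a b) f.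
Proof. reflexivity. Qed.

Lemma RHS_I_form r s beta k i :
  RHS_I r s beta k i = (Cpowz Ci (s + 1 - i) * RtoC (prefac r s beta i / PI) *
                        (U r s beta k i, (PI * V r s beta k i)%R))%C.
Proof.
  unfold RHS_I. rewrite !zsumC_sumC, sumC_map_R.
  rewrite (sumC_ext _ _ (fun j => (RtoC (BB beta j ^ Z.to_nat (k - 1) * GG r s beta j i) * (beta j, PI))%C)).
  2:{ intros j _. rewrite <- RtoC_pow. apply injective_projections; simpl; ring. }
  rewrite sumC_pair. rewrite RtoC_div by (pose proof PI_RGT_0; lra).
  assert (HP : RtoC PI <> 0) by (intro H'; apply RtoC_inj in H'; pose proof PI_RGT_0; lra).
  unfold U, V, qk. rewrite <- sumR_scal.
  set (A := sumR (zrange r i) _). set (B1 := sumR (zrange i s) _).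
  set (B2 := sumR (zrange i s) _). set (B3 := sumR (zrange i s) _). set (B4 := sumR (zrange i s) _).
  assert (E1 : B1 = B3) by (apply sumR_ext; intros; ring).
  assert (E2 : B2 = B4) by (apply sumR_ext; intros; ring).
  rewrite E1, E2. unfold Cdiv.
  replace (RtoC A + (B3, B4))%C with ((A + B3)%R, B4) by (apply injective_projections; simpl; ring).
  ring.
Qed.

Lemma Kp_eq r s beta i : Kp r s beta i = prefac r s beta i / (2 * PI).
Proof.
  unfold Kp, prefac. unfold zprodR. rewrite (proj1 (sqrt_prod_exp (zrange r s) beta)). auto.
Qed.

Theorem propositionE1 :
  forall (r s : Z) (beta : Z -> R),
    (r <= s)%Z ->
    (forall j1 j2 : Z, (r <= j1 <= s)%Z -> (r <= j2 <= s)%Z ->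
       beta j1 = beta j2 -> j1 = j2) ->
    forall k i : Z,
      (1 <= k <= nn r s)%Z -> (r <= i <= s)%Z ->
      (exists delta : R, 0 < delta /\
         forall eps : R, 0 < eps < delta ->
           Ival_on_line r s beta k i eps (RHS_I r s beta k i))
      /\ Jof s i (RHS_I r s beta k i) = RHS_J1 r s beta k i
      /\ RHS_J1 r s beta k i = RHS_J2 r s beta k i.
Proof.
  intros r s beta Hrs Hinj k i Hk Hi.
  assert (HPI : 0 < PI) by apply PI_RGT_0.
  assert (HP : RtoC PI <> 0) by (intro H'; apply RtoC_inj in H'; lra).
  set (p := Z.to_nat (s - r)).
  assert (HnN : nN r s = S p) by (unfold nN, nn, p; lia).
  set (p' := Z.to_nat (s - i)).
  assert (Hc1 : Cpowz Ci (s + 1 - i) = (Ci * Ci ^ p')%C).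
  { replace (s + 1 - i)%Z with (Z.of_nat (S p')) by (unfold p'; lia).
    rewrite Cpowz_nat. apply Cpow_S. }
  assert (Hc2 : Cpowz Ci (s - i) = (Ci ^ p')%C).
  { replace (s - i)%Z with (Z.of_nat p') by (unfold p'; lia). apply Cpowz_nat. }
  split; [|split].
  - exists PI. split; auto. intros eps Heps.
    exists (0 - Mr r s beta k i, 0 - Mi r s beta k i). split.
    + apply Ival_core; auto.
    + rewrite RHS_I_form, (Mr_eq r s beta k i), (Mi_eq r s beta k i), Kp_eq, HnN by auto.
      replace (s + 1 - i)%Z with ((2 * r - s + 1 - i) + Z.of_nat (2 * p))%Z by (unfold p; lia).
      rewrite Cpowz_add_nat, Ci_even by apply Ci_nz.
      set (X := Cpowz Ci (2 * r - s + 1 - i)).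
      set (c := prefac r s beta i).
      replace (0 - c / (2 * PI) * (-1) ^ S p * U r s beta k i,
               0 - c / (2 * PI) * (-1) ^ S p * PI * V r s beta k i)
        with (RtoC (c / (2 * PI) * (-1) ^ p) * (U r s beta k i, (PI * V r s beta k i)%R))%C
        by (apply injective_projections; simpl; ring).
      assert (E : (RtoC ((-1) ^ p) * RtoC (c / PI) = 2 * RtoC (c / (2 * PI) * (-1) ^ p))%C).
      { rewrite <- !RtoC_mult. f_equal. field. lra. }
      transitivity (X * (RtoC ((-1) ^ p) * RtoC (c / PI)) * (U r s beta k i, (PI * V r s beta k i)%R))%C.
      ring. rewrite E. ring.
  - rewrite RHS_I_form. unfold Jof, RHS_J1.
    rewrite Hc1, Hc2.
    rewrite !Cmult_conj, Cpow_conj.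
    replace (Cconj Ci) with (RtoC (-1) * Ci)%C by (apply injective_projections; simpl; ring).
    rewrite Cpow_mult_l.
    assert (Hs : (Cpowz (RtoC (-1)) (s + i) * RtoC (-1) ^ p')%C = RtoC 1).
    { assert (H1 := Cpowz_add_nat (RtoC (-1)) (s + i) (S p') m1_nz).
      replace (s + i + Z.of_nat (S p'))%Z with (2 * s + 1)%Z in H1 by (unfold p'; lia).
      rewrite Cpowz_m1_odd, Cpow_S in H1.
      assert (Hm : (RtoC (-1) * RtoC (-1))%C = RtoC 1) by (rewrite <- RtoC_mult; f_equal; ring).
      assert (H2 : (RtoC (-1) * (Cpowz (RtoC (-1)) (s + i) * RtoC (-1) ^ p'))%C = RtoC (-1)).
      { transitivity (Cpowz (RtoC (-1)) (s + i) * (RtoC (-1) * RtoC (-1) ^ p'))%C. ring.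
        exact (eq_sym H1). }
      transitivity (RtoC (-1) * (RtoC (-1) * (Cpowz (RtoC (-1)) (s + i) * RtoC (-1) ^ p')))%C.
      rewrite Cmult_assoc, Hm. ring. rewrite H2. exact Hm. }
    rewrite zsumC_sumC, sumC_map_R.
    pose proof (W_eq r s beta k i Hi Hinj Hk) as HW. unfold W1 in HW. unfold qk in HW.
    replace (sumR (zrange r i) (fun j => (- BB beta j) ^ Z.to_nat (k - 1) * FF r s beta j i))
      with (- V r s beta k i) by lra.
    set (Vv := V r s beta k i). set (Uu := U r s beta k i).
    assert (Ecj : Cconj (RtoC (prefac r s beta i / PI)) = RtoC (prefac r s beta i / PI)).
    { apply injective_projections; simpl; ring. }
    assert (Ecp : Cconj (Uu, (PI * Vv)%R) = (Uu, (- (PI * Vv))%R)).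
    { apply injective_projections; simpl; ring. }
    rewrite Ecj, Ecp.
    transitivity (Ci ^ p' * (Ci * RtoC (prefac r s beta i / PI) * ((Uu, (PI * Vv)%R) 
        - (Cpowz (RtoC (-1)) (s + i) * RtoC (-1) ^ p') * (Uu, (- (PI * Vv))%R))))%C.
    { assert (Hn : (RtoC (-1) * Ci)%C = (- Ci)%C) by (apply injective_projections; simpl; ring). rewrite Hn. ring. }
    rewrite Hs.
    transitivity (Ci ^ p' * RtoC (2 * prefac r s beta i * (- Vv)))%C.
    { f_equal. apply injective_projections; simpl; field; lra. }
    rewrite !RtoC_mult. ring.
  - unfold RHS_J1, RHS_J2. rewrite !zsumC_sumC, !sumC_map_R.
    pose proof (W_eq r s beta k i Hi Hinj Hk) as HW. unfold W1, V, qk in HW.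
    replace (sumR (zrange r i) (fun j => (- BB beta j) ^ Z.to_nat (k - 1) * FF r s beta j i))
      with (- sumR (zrange i s) (fun j => BB beta j ^ Z.to_nat (k - 1) * GG r s beta j i)) by lra.
    rewrite RtoC_opp. ring.
Qed.
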